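(* Let $SI$, $UI$, $CI$ be a nonnegative bivariate information decomposition, let $\overline{SI}(S;X_1,X_2):=\sup_{f} SI(f(S);X_1,X_2)$ (supremum over all functions $f$ from the alphabet of $S$ to an arbitrary finite set), and define $\overline{UI}^*(S;X_1\setminus X_2):=I(S;X_1)-\overline{SI}(S;X_1,X_2)$ and $\overline{UI}^*(S;X_2\setminus X_1):=I(S;X_2)-\overline{SI}(S;X_1,X_2)$. If $UI$ has the Blackwell property, then $\overline{UI}^*$ does not have the Blackwell property.
   Context: All random variables have finite alphabets. A nonnegative bivariate information decomposition consists of nonnegative functions $SI(S;X_1,X_2)$, $UI(S;X_1\setminus X_2)$, $UI(S;X_2\setminus X_1)$, $CI(S;X_1,X_2)$, defined for every joint distribution of $(S,X_1,X_2)$ with arbitrary finite alphabets and depending continuously on it, such that $I(S;X_1X_2)=SI(S;X_1,X_2)+CI(S;X_1,X_2)+UI(S;X_1\setminus X_2)+UI(S;X_2\setminus X_1)$, $I(S;X_1)=SI(S;X_1,X_2)+UI(S;X_1\setminus X_2)$ and $I(S;X_2)=SI(S;X_1,X_2)+UI(S;X_2\setminus X_1)$, where $I$ denotes mutual information. A unique-information measure $U$ has the Blackwell property if for every joint distribution $P_{SX_1X_2}$ (with finite alphabets): $U(S;X_1\setminus X_2)=0$ if and only if there exists a random variable $X_1'$ such that $S - X_2 - X_1'$ is a Markov chain and $P_{SX_1'}=P_{SX_1}$ (i.e. the channel $S\to X_1$ is a garbling of the channel $S\to X_2$). *)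

(* Defs.v *)
From HB Require Import structures.
From mathcomp Require Import all_boot all_order all_algebra.
From mathcomp Require Import boolp classical_sets reals exp.
Set Implicit Arguments. Unset Strict Implicit. Unset Printing Implicit Defensive.
Import Order.TTheory GRing.Theory Num.Theory.
Local Open Scope ring_scope.

Section InfoDefs.
Variable R : realType.

Definition is_dist (T : finType) (p : {ffun T -> R}) : Prop :=
  (forall t, 0 <= p t) /\ \sum_(t : T) p t = 1.

Definition MI (A B : finType) (q : {ffun A * B -> R}) : R :=
  \sum_(ab : A * B)
    (if q ab == 0 then 0
     else q ab * ln (q ab / ((\sum_(b : B) q (ab.1, b)) * (\sum_(a : A) q (a, ab.2))))).

Definition margSX1 (S X1 X2 : finType) (p : {ffun S * X1 * X2 -> R}) : {ffun S * X1 -> R} :=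
  [ffun sx => \sum_(x2 : X2) p (sx.1, sx.2, x2)].
Definition margSX2 (S X1 X2 : finType) (p : {ffun S * X1 * X2 -> R}) : {ffun S * X2 -> R} :=
  [ffun sx => \sum_(x1 : X1) p (sx.1, x1, sx.2)].
Definition margSX12 (S X1 X2 : finType) (p : {ffun S * X1 * X2 -> R}) : {ffun S * (X1 * X2) -> R} :=
  [ffun sx => p (sx.1, sx.2.1, sx.2.2)].

Definition swap12 (S X1 X2 : finType) (p : {ffun S * X1 * X2 -> R}) : {ffun S * X2 * X1 -> R} :=
  [ffun t => p (t.1.1, t.2, t.1.2)].

Definition pushS (S T X1 X2 : finType) (f : S -> T) (p : {ffun S * X1 * X2 -> R}) :
  {ffun T * X1 * X2 -> R} :=
  [ffun t => \sum_(s : S | f s == t.1.1) p (s, t.1.2, t.2)].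

Definition pid_fun := forall S X1 X2 : finType, {ffun S * X1 * X2 -> R} -> R.

Definition continuous_on_dists (F : pid_fun) : Prop :=
  forall (S X1 X2 : finType) (p : {ffun S * X1 * X2 -> R}), is_dist p ->
  forall e : R, 0 < e -> exists2 d : R, 0 < d &
    forall q : {ffun S * X1 * X2 -> R}, is_dist q ->
      (forall t, `|p t - q t| < d) -> `|F S X1 X2 q - F S X1 X2 p| < e.

(* nonnegative bivariate information decomposition.
   UI S X1 X2 p = UI(S; X1 \ X2); UI(S; X2 \ X1) is UI at the swapped distribution. *)
Record decomposition := Decomposition {
  SI : pid_fun;
  UI : pid_fun;
  CI : pid_fun;
  SI_ge0 : forall (S X1 X2 : finType) (p : {ffun S * X1 * X2 -> R}), is_dist p -> 0 <= SI p;
  UI_ge0 : forall (S X1 X2 : finType) (p : {ffun S * X1 * X2 -> R}), is_dist p -> 0 <= UI p;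
  CI_ge0 : forall (S X1 X2 : finType) (p : {ffun S * X1 * X2 -> R}), is_dist p -> 0 <= CI p;
  SI_cont : continuous_on_dists SI;
  UI_cont : continuous_on_dists UI;
  CI_cont : continuous_on_dists CI;
  decomp_joint : forall (S X1 X2 : finType) (p : {ffun S * X1 * X2 -> R}), is_dist p ->
    MI (margSX12 p) = SI p + CI p + UI p + UI (swap12 p);
  decomp_X1 : forall (S X1 X2 : finType) (p : {ffun S * X1 * X2 -> R}), is_dist p ->
    MI (margSX1 p) = SI p + UI p;
  decomp_X2 : forall (S X1 X2 : finType) (p : {ffun S * X1 * X2 -> R}), is_dist p ->
    MI (margSX2 p) = SI p + UI (swap12 p)
}.

(* There is a random variable X1' (values in the alphabet of X1), jointly
   distributed with (S, X1, X2), such that S - X2 - X1' is a Markov chain and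
   P_{S X1'} = P_{S X1}.  Q is the joint law of (S, X1, X2, X1'). *)
Definition garbling (S X1 X2 : finType) (p : {ffun S * X1 * X2 -> R}) : Prop :=
  exists Q : {ffun S * X1 * X2 * X1 -> R},
    [/\ is_dist Q,
        (forall s x1 x2, \sum_(y : X1) Q (s, x1, x2, y) = p (s, x1, x2)),
        (forall s x2 y,
           (\sum_(x1 : X1) Q (s, x1, x2, y)) *
           (\sum_(s' : S) \sum_(x1 : X1) \sum_(y' : X1) Q (s', x1, x2, y'))
         = (\sum_(x1 : X1) \sum_(y' : X1) Q (s, x1, x2, y')) *
           (\sum_(s' : S) \sum_(x1 : X1) Q (s', x1, x2, y))) &
        (forall s y,
           \sum_(x1 : X1) \sum_(x2 : X2) Q (s, x1, x2, y)
           = \sum_(x2 : X2) p (s, y, x2))].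

Definition blackwell (U : pid_fun) : Prop :=
  forall (S X1 X2 : finType) (p : {ffun S * X1 * X2 -> R}), is_dist p ->
    (U S X1 X2 p = 0 <-> garbling p).

Definition SIbar (D : decomposition) : pid_fun :=
  fun S X1 X2 p =>
    sup [set r : R | exists (T : finType) (f : S -> T), r = SI D (pushS f p)].

Definition UIbarstar (D : decomposition) : pid_fun :=
  fun S X1 X2 p => MI (margSX1 p) - SIbar D p.

End InfoDefs.

(* Main.v *)
Set Warnings "-notation-overridden,-ambiguous-paths".
Require Import Defs.
From HB Require Import structures.
From mathcomp Require Import all_boot all_order all_algebra.
From mathcomp Require Import boolp classical_sets reals exp.
From mathcomp Require Import ring lra.
Set Implicit Arguments. Unset Strict Implicit. Unset Printing Implicit Defensive.
Import Order.TTheory GRing.Theory Num.Theory.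
Local Open Scope ring_scope.

Definition pushX (R : realType) (S T X : finType) (f : S -> T) (q : {ffun S * X -> R}) :
  {ffun T * X -> R} := [ffun tx => \sum_(s | f s == tx.1) q (s, tx.2)].

Lemma MI_push (R : realType) (S T X : finType) (f : S -> T) (q : {ffun S * X -> R}) :
  (forall z, 0 <= q z) -> MI (pushX f q) <= MI q.
Proof.
move=> q0.
set q' := pushX f q.
have q'E t x : q' (t,x) = \sum_(s | f s == t) q (s,x) by rewrite ffunE.
have q'0 z : 0 <= q' z by rewrite ffunE sumr_ge0.
pose r s := \sum_(x : X) q (s,x).
pose r' t := \sum_(x : X) q' (t,x).
pose c x := \sum_(s : S) q (s,x).
have colE x : \sum_(t : T) q' (t,x) = c x.
  under eq_bigr do rewrite q'E.
  rewrite /c [RHS](partition_big f xpredT) //=.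
have r'E t : r' t = \sum_(s | f s == t) r s.
  by rewrite /r'; under eq_bigr do rewrite q'E; rewrite exchange_big.
have r0 s : 0 <= r s by rewrite sumr_ge0.
have rle s : r s <= r' (f s).
  by rewrite r'E (bigD1 s) //= lerDl sumr_ge0.
have qle s x : q (s,x) <= q' (f s, x).
  by rewrite q'E (bigD1 s) //= lerDl sumr_ge0.
have qler s x : q (s,x) <= r s by rewrite /r (bigD1 x) //= lerDl sumr_ge0.
have qlec s x : q (s,x) <= c x by rewrite /c (bigD1 s) //= lerDl sumr_ge0.
pose psi (w : S * X) := if q w == 0 then 0
  else q w * ln (q' (f w.1, w.2) / (r' (f w.1) * c w.2)).
have A : MI q' = \sum_(w : S * X) psi w.
  transitivity (\sum_(z : T * X) \sum_(s | f s == z.1) psi (s, z.2)).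
    apply: eq_bigr => -[t x] _ /=. rewrite colE.
    case: eqP => [H|H].
      apply/esym/big1 => s /eqP fs.
      have := psumr_eq0P (fun s _ => q0 (s, x)) (etrans (esym (q'E t x)) H).
      by move=> /(_ s); rewrite fs eqxx => /(_ isT) qz; rewrite /psi /= qz eqxx.
    rewrite [X in X * ln _]q'E big_distrl /=.
    apply: eq_bigr => s /eqP fs; rewrite /psi /= fs.
    by case: eqP => [->|]; rewrite ?mul0r.
  rewrite -(pair_bigA _ (fun t x => \sum_(s | f s == t) psi (s, x))) exchange_big /=.
  transitivity (\sum_(s : S) \sum_(x : X) psi (s, x)); last first.
    by rewrite pair_bigA; apply: eq_big => // -[].
  rewrite [RHS]exchange_big /=; apply: eq_big => // x _.
  by rewrite [RHS](partition_big f xpredT) //=.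
rewrite A -subr_ge0.
have B : \sum_(w : S * X) (q w - r w.1 * q' (f w.1, w.2) / r' (f w.1)) = 0.
  transitivity (\sum_(s : S) \sum_(x : X) (q (s, x) - r s * q' (f s, x) / r' (f s))).
    by rewrite pair_bigA; apply: eq_big => // -[].
  rewrite big1 // => s _.
  rewrite sumrB [X in _ - X](eq_bigr (fun x => r s / r' (f s) * q' (f s, x))); last first.
    by move=> x _; rewrite mulrAC.
  rewrite -mulr_sumr -/(r s) -/(r' (f s)).
  have [e|nz] := eqVneq (r' (f s)) 0.
    rewrite e; have : r s = 0 by apply/le_anti; rewrite r0 andbT -e rle.
    by move=> ->; rewrite !mul0r subrr.
  by rewrite divfK // subrr.
rewrite -[X in X <= _]B /MI -sumrB; apply: ler_sum => -[s x] _ /=.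
rewrite -/(r s) -/(c x) /psi /=.
case: eqP => [qz|/eqP qnz].
  by rewrite qz subr0 sub0r oppr_le0 !mulr_ge0 ?invr_ge0 ?(le_trans (r0 s) (rle s)) ?r0 ?q'0.
have qp : 0 < q (s,x) by rewrite lt_def qnz q0.
have rp : 0 < r s by apply: lt_le_trans qp (qler s x).
have r'p : 0 < r' (f s) by apply: lt_le_trans rp (rle s).
have q'p : 0 < q' (f s, x) by apply: lt_le_trans qp (qle s x).
have cp : 0 < c x by apply: lt_le_trans qp (qlec s x).
set Q := q (s,x); set Q' := q' (f s, x); set rr := r s; set rr' := r' (f s); set cc := c x.
pose y := (rr * Q') / (Q * rr').
have yp : 0 < y by rewrite /y divr_gt0 ?mulr_gt0.
have E : Q' / (rr' * cc) = y * (Q / (rr * cc)).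
  rewrite /y; field; rewrite ?lt0r_neq0 ?mulr_gt0 //.
  all: try by apply/andP; split; apply: lt0r_neq0.
have lnE : ln (Q' / (rr' * cc)) = ln y + ln (Q / (rr * cc)).
  by rewrite E lnM // posrE divr_gt0 ?mulr_gt0.
rewrite lnE.
have Hy : ln y <= y - 1.
  have := @le_ln1Dx R (y - 1); rewrite (_ : 1 + (y - 1) = y); [apply; lra | by rewrite addrC subrK].
have Qy : Q * y = rr * Q' / rr'.
  by rewrite /y; field; apply/andP; split; apply: lt0r_neq0.
have : Q * ln y <= Q * (y - 1) by rewrite ler_wpM2l // ltW.
rewrite mulrBr mulr1 Qy mulrDr; lra.
Qed.

Lemma sum_opt (R : realType) (F : option bool -> R) :
  \sum_(o : option bool) F o = F None + (F (Some true) + F (Some false)).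
Proof.
rewrite (bigD1 None) //=; congr (_ + _).
rewrite (reindex_omap Some (fun o => o)) //=; last by case=> //.
by rewrite big_mkcond big_bool.
Qed.

Lemma sum_pair (R : realType) (A B : finType) (F : A * B -> R) :
  \sum_(z : A * B) F z = \sum_(a : A) \sum_(b : B) F (a, b).
Proof. by rewrite pair_bigA; apply: eq_big => // -[]. Qed.

Definition wt (R : realType) (a x : bool) : R := if x == a then 3/4 else 1/4.
Definition pv (R : realType) (a b x1 : bool) (x2 : option bool) : R :=
  1/4 * wt R a x1 * (if b then (if x2 is None then 1 else 0) else (if x2 == Some a then 1 else 0)).
Definition ex (R : realType) : {ffun (bool * bool) * bool * option bool -> R} :=
  [ffun z => pv R z.1.1.1 z.1.1.2 z.1.2 z.2].

Ltac expand := rewrite ?big_mkcond /= ; do 4 (rewrite ?sum_pair /= ?big_bool /= ?sum_opt /=).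

Lemma ex_dist (R : realType) : is_dist (ex R).
Proof.
split.
  move=> -[[[a b] x1] x2]; rewrite ffunE /pv /wt /=.
  by case: a; case: b; case: x1; case: x2 => [[]|] /=; lra.
expand; rewrite !ffunE /pv /wt /=; lra.
Qed.

Lemma ex_not_garb (R : realType) : ~ garbling (ex R).
Proof.
move=> [Q [[Q0 _] hsum hmark hmarg]].
have z a x1 b y : Q ((a, true), x1, Some b, y) = 0.
  have e := hsum (a, true) x1 (Some b).
  rewrite ffunE /pv /= mulr0 in e.
  exact: (psumr_eq0P (fun y _ => Q0 ((a, true), x1, Some b, y)) e (i:=y) isT).
pose G a := \sum_(x1 : bool) Q ((a, true), x1, None, true).
have H4 a : G a = 1/4 * wt R a true.
  have e := hmarg (a, true) true.
  have e2 : \sum_(x1 : bool) \sum_(x2 : option bool) Q ((a, true), x1, x2, true) = G a.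
    by apply: eq_bigr => x1 _; rewrite sum_opt !z !addr0.
  rewrite -e2 e sum_opt !ffunE /pv /=; lra.
have Ms a : \sum_(x1 : bool) \sum_(y' : bool) Q ((a, true), x1, None, y') = 1/4.
  under eq_bigr do rewrite hsum.
  rewrite big_bool !ffunE /pv /wt /=; case: a => /=; lra.
set N := \sum_(s' : bool * bool) \sum_(x1 : bool) \sum_(y' : bool) Q (s', x1, None, y').
have NE : N = 1/2.
  rewrite /N; under eq_bigr do under eq_bigr do rewrite hsum.
  expand; rewrite !ffunE /pv /wt /=; lra.
have hG a : G a * N = 1/4 * \sum_(s' : bool * bool) \sum_(x1 : bool) Q (s', x1, None, true).
  by rewrite /G /N hmark Ms.
have := hG true; have := hG false; rewrite NE !H4 /wt /=. lra.
Qed.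

Definition pp (R : realType) (t x1 : bool) (x2 : option bool) : R :=
  1/4 * wt R t x1 * ((if x2 is None then 1 else 0) + (if x2 == Some t then 1 else 0)).

Lemma pushE (R : realType) t x1 x2 : pushS fst (ex R) (t, x1, x2) = pp R t x1 x2.
Proof.
rewrite ffunE /=; expand; rewrite !ffunE /pv /pp /=.
by case: t; case: x2 => [[]|] /=; lra.
Qed.

Definition kap (R : realType) (x2 : option bool) (y : bool) : R :=
  if x2 is Some a then (if y == a then 1 else 0) else 1/2.

Definition Qg (R : realType) : {ffun (bool * bool * option bool * bool) -> R} :=
  [ffun z => pp R z.1.1.1 z.1.1.2 z.1.2 * kap R z.1.2 z.2].
Lemma QgE (R : realType) t x1 x2 y : Qg R (t, x1, x2, y) = pp R t x1 x2 * kap R x2 y.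
Proof. by rewrite ffunE. Qed.

Lemma garb_push (R : realType) : garbling (pushS fst (ex R)).
Proof.
exists (Qg R); split.
- split.
    move=> -[[[t x1] x2] y]; rewrite QgE /pp /kap /wt /=.
    by case: t; case: x1; case: x2 => [[]|] /=; case: y => /=; lra.
  expand; rewrite !QgE ?pushE /pp /kap /wt /=; lra.
- move=> t x1 x2; rewrite big_bool !QgE pushE.
  by case: x2 => [[]|]; case: t; case: x1; rewrite /pp /kap /wt /=; lra.
- move=> t x2 y; expand; rewrite !QgE ?pushE /pp /kap /wt /=.
  by case: t; case: x2 => [[]|] /=; case: y => /=; lra.
- move=> t y; expand; rewrite !QgE ?pushE /pp /kap /wt /=.
  by case: t; case: y => /=; lra.
Qed.

Lemma m1 (R : realType) s x : margSX1 (ex R) (s, x) = 1/4 * wt R s.1 x.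
Proof.
rewrite ffunE sum_opt !ffunE /pv /=.
by case: s => -[] [] /=; case: x; rewrite /wt /=; lra.
Qed.

Lemma m2 (R : realType) t x : margSX1 (pushS fst (ex R)) (t, x) = 1/2 * wt R t x.
Proof.
rewrite ffunE sum_opt /= !pushE /pp /=.
by case: t; case: x; rewrite /wt /=; lra.
Qed.

Lemma wt_gt0 (R : realType) a x : 0 < wt R a x.
Proof. by rewrite /wt; case: (x == a); lra. Qed.

Lemma MI_ex (R : realType) : MI (margSX1 (pushS fst (ex R))) = MI (margSX1 (ex R)).
Proof.
have rs s : \sum_(b : bool) margSX1 (ex R) (s, b) = 1/4.
  by rewrite big_bool !m1; case: s => -[] b; rewrite /wt /=; lra.
have cs x : \sum_(s : bool * bool) margSX1 (ex R) (s, x) = 1/2.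
  by expand; rewrite !m1 /wt /=; case: x => /=; lra.
have rs2 t : \sum_(b : bool) margSX1 (pushS fst (ex R)) (t, b) = 1/2.
  by rewrite big_bool !m2; case: t; rewrite /wt /=; lra.
have cs2 x : \sum_(t : bool) margSX1 (pushS fst (ex R)) (t, x) = 1/2.
  by rewrite big_bool !m2; case: x; rewrite /wt /=; lra.
transitivity (\sum_(z : bool * bool) 1/2 * wt R z.1 z.2 * ln (2 * wt R z.1 z.2)).
  apply: eq_bigr => -[t x] _ /=; rewrite rs2 cs2 m2.
  have wp := wt_gt0 R t x.
  rewrite ifF; last by apply/negbTE; rewrite mulf_neq0 // ?lt0r_neq0 //; lra.
  by congr (_ * ln _); field.
transitivity (\sum_(z : (bool * bool) * bool) 1/4 * wt R z.1.1 z.2 * ln (2 * wt R z.1.1 z.2)); last first.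
  apply: eq_bigr => -[s x] _ /=; rewrite rs cs m1.
  have wp := wt_gt0 R s.1 x.
  rewrite ifF; last by apply/negbTE; rewrite mulf_neq0 // ?lt0r_neq0 //; lra.
  by congr (_ * ln _); field.
expand; rewrite /wt /=; lra.
Qed.

Lemma sum_pushX (R : realType) (S T X : finType) (f : S -> T) (q : {ffun S * X -> R}) :
  \sum_(z : T * X) pushX f q z = \sum_(w : S * X) q w.
Proof.
rewrite !sum_pair exchange_big [RHS]exchange_big /=; apply: eq_big => // x _.
under eq_bigr do rewrite ffunE /=.
by rewrite [RHS](partition_big f xpredT).
Qed.

Lemma sum_assoc (R : realType) (A B C : finType) (F : A * B * C -> R) :
  \sum_(z : A * B * C) F z = \sum_(z : A * (B * C)) F (z.1, z.2.1, z.2.2).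
Proof.
rewrite !sum_pair; apply: eq_big => // a _.
by rewrite sum_pair; apply: eq_big => // b _.
Qed.

Lemma push_dist (R : realType) (S T X1 X2 : finType) (f : S -> T) (p : {ffun S * X1 * X2 -> R}) :
  is_dist p -> is_dist (pushS f p).
Proof.
move=> [p0 p1]; split.
  by move=> z; rewrite ffunE sumr_ge0.
pose q : {ffun S * (X1 * X2) -> R} := [ffun w => p (w.1, w.2.1, w.2.2)].
rewrite sum_assoc.
transitivity (\sum_(z : T * (X1 * X2)) pushX f q z).
  by apply: eq_bigr => -[t [x1 x2]] _; rewrite !ffunE; apply: eq_bigr => s _; rewrite ffunE.
rewrite sum_pushX -p1 [RHS]sum_assoc; apply: eq_bigr => -[s [x1 x2]] _.
by rewrite ffunE.
Qed.

Lemma marg_push (R : realType) (S T X1 X2 : finType) (f : S -> T) (p : {ffun S * X1 * X2 -> R}) :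
  margSX1 (pushS f p) = pushX f (margSX1 p).
Proof.
apply/ffunP => -[t x1]; rewrite !ffunE /=.
under eq_bigr do rewrite ffunE /=.
rewrite exchange_big; apply: eq_bigr => s _.
by rewrite ffunE.
Qed.

Lemma SI_push_le (R : realType) (D : decomposition R) (S T X1 X2 : finType) (f : S -> T)
  (p : {ffun S * X1 * X2 -> R}) :
  is_dist p -> SI D (pushS f p) <= MI (margSX1 p).
Proof.
move=> dp; have dq := push_dist f dp.
have e := decomp_X1 D dq; have u := UI_ge0 D dq.
have : MI (margSX1 (pushS f p)) <= MI (margSX1 p).
  rewrite marg_push; apply: MI_push => -[s x1]; rewrite ffunE sumr_ge0 // => x2 _.
  by case: dp => + _; apply.
lra.
Qed.

Theorem theorem1 (R : realType) (D : decomposition R) :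
  blackwell (UI D) -> ~ blackwell (UIbarstar D).
Proof.
move=> BU BB.
have dp := ex_dist R.
have dq := push_dist fst dp.
have U0 : UI D (pushS fst (ex R)) = 0 by apply/(BU _ _ _ _ dq); exact: garb_push.
have SIe : SI D (pushS fst (ex R)) = MI (margSX1 (ex R)).
  by have := decomp_X1 D dq; rewrite U0 addr0 MI_ex.
apply: (ex_not_garb (R := R)); apply/(BB _ _ _ _ dp).
rewrite /UIbarstar /SIbar; apply/eqP; rewrite subr_eq0; apply/eqP/le_anti/andP; split.
  apply: ub_le_sup.
    exists (MI (margSX1 (ex R))) => r [T [f ->]]; exact: SI_push_le.
  by exists _, fst.
apply: ge_sup.
  by exists (SI D (pushS fst (ex R))), _, fst.
by move=> r [T [f ->]]; exact: SI_push_le.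
Qed.
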